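(* Suppose the embedding uses one-time data encoding: $\rho_\theta(x)=U(\theta)S(x)|0\rangle\langle0|S(x)^\dagger U(\theta)^\dagger$ where $U(\theta)=\prod_{l=1}^L U_l(\theta_l)$ is unitary and $S(x)$ is a unitary encoding gate. Let $\kappa(x)=S(x)|0\rangle\langle0|S(x)^\dagger$. Then for $\mathcal A\in\{\mathcal S,\mathcal T\}$, $$\mathfrak R^{\mathcal A}_{\Theta,\mathcal M}\le\mathrm{Tr}\Bigl(\sqrt{\mathbb E_{x\sim p^{\mathcal A}(x)}[\kappa(x)^2]}\Bigr).$$
   Context: $\mathcal X$ finite, labels $c\in\{0,1\}$, $\Theta$ a parameter set, $\mathcal M$ the set of binary POVMs $M=(M_0,M_1)$ on $\mathbb C^n$ ($M_0,M_1\succeq0$, $M_0+M_1=I$), loss $\ell_{\theta,M}(c,x)=1-\mathrm{Tr}(M_c\rho_\theta(x))$. For task $\mathcal A$ with distribution $p^{\mathcal A}(c,x)$ (input marginal $p^{\mathcal A}(x)$) and sample size $N^{\mathcal A}$, let $(c_j,x_j)$ be i.i.d. from $p^{\mathcal A}$ and $\sigma_j$ i.i.d. uniform on $\{\pm1\}$ independent of data; $$\mathfrak R^{\mathcal A}_{\Theta,\mathcal M}=\mathbb E\Bigl[\sup_{\theta\in\Theta,M\in\mathcal M}\sum_{j=1}^{N^{\mathcal A}}\frac{\sigma_j\ell_{\theta,M}(c_j,x_j)}{\sqrt{N^{\mathcal A}}}\Bigr].$$ *)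

(* Defs.v *)
From HB Require Import structures.
From mathcomp Require Import all_boot all_order all_algebra.
From mathcomp Require Import complex.
From mathcomp Require Import boolp classical_sets reals.
Set Implicit Arguments. Unset Strict Implicit. Unset Printing Implicit Defensive.
Import Order.TTheory GRing.Theory Num.Theory.
Local Open Scope ring_scope.

Section QDefs.
Variable R : realType.
Local Notation C := R[i].

Definition cR (r : R) : C := Complex r 0.

Definition adj (m k : nat) (A : 'M[C]_(m, k)) : 'M[C]_(k, m) :=
  (map_mx (@conjc R) A)^T.

Definition unitary (n : nat) (U : 'M[C]_n) : Prop :=
  adj U *m U = 1%:M /\ U *m adj U = 1%:M.

Definition psd (n : nat) (A : 'M[C]_n) : Prop :=
  adj A = A /\ forall v : 'cV[C]_n, 0 <= (adj v *m A *m v) 0 0.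

(* binary POVM (M_0, M_1) = (M false, M true) *)
Definition binPOVM (n : nat) (M : bool -> 'M[C]_n) : Prop :=
  psd (M false) /\ psd (M true) /\ M false + M true = 1%:M.

Definition ket0 (n : nat) : 'cV[C]_n.+1 := delta_mx 0 0.
Definition proj0 (n : nat) : 'M[C]_n.+1 := ket0 n *m adj (ket0 n).

Definition kappa (n : nat) (S : 'M[C]_n.+1) : 'M[C]_n.+1 :=
  S *m proj0 n *m adj S.

Definition rho_enc (n : nat) (U S : 'M[C]_n.+1) : 'M[C]_n.+1 :=
  U *m kappa S *m adj U.

Definition Uprod (n L : nat) (P : Type) (Ul : 'I_L -> P -> 'M[C]_n.+1)
  (theta : 'I_L -> P) : 'M[C]_n.+1 :=
  \big[mulmx/1%:M]_(l < L) Ul l (theta l).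

(* loss l_{theta,M}(c,x) = 1 - Tr(M_c rho) (real, taken as real part) *)
Definition loss (n : nat) (M : bool -> 'M[C]_n.+1) (rho : 'M[C]_n.+1)
  (c : bool) : R :=
  complex.Re (1 - \tr (M c *m rho)).

Definition is_distr (X : finType) (p : bool * X -> R) : Prop :=
  (forall z, 0 <= p z) /\ \sum_(z : bool * X) p z = 1.

Definition marginal (X : finType) (p : bool * X -> R) (x : X) : R :=
  p (false, x) + p (true, x).

(* empirical Rademacher complexity averaged over data and signs;
   sigma_j = +1 iff s j = true *)
Definition rademacher (n L N : nat) (P : Type) (X : finType)
  (p : bool * X -> R) (Theta : set ('I_L -> P))
  (Ul : 'I_L -> P -> 'M[C]_n.+1) (S : X -> 'M[C]_n.+1) : R :=
  \sum_(z : {ffun 'I_N -> bool * X})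
   \sum_(s : {ffun 'I_N -> bool})
     ((\prod_(j < N) p (z j)) * (2 ^- N)) *
     sup [set r | exists theta M, Theta theta /\ binPOVM M /\
        r = \sum_(j < N) (if s j then 1 else -1) *
              loss M (rho_enc (Uprod Ul theta) (S (z j).2)) (z j).1
              / Num.sqrt (N%:R)].

Definition Ekappa2 (n : nat) (X : finType) (p : bool * X -> R)
  (S : X -> 'M[C]_n.+1) : 'M[C]_n.+1 :=
  \sum_(x : X) cR (marginal p x) *: (kappa (S x) *m kappa (S x)).

End QDefs.

(* Main.v *)
Require Import Defs.
From HB Require Import structures.
From mathcomp Require Import all_boot all_order all_algebra.
From mathcomp Require Import complex.
From mathcomp Require Import boolp classical_sets reals.
From mathcomp Require Import sesquilinear spectral.
From mathcomp Require Import ring lra.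
Set Implicit Arguments. Unset Strict Implicit. Unset Printing Implicit Defensive.
Import Order.TTheory GRing.Theory Num.Theory.
Local Open Scope ring_scope.

Section Aux.
Variable R : realType.
Local Notation C := R[i].

Lemma ReD (x y : C) : complex.Re (x + y) = complex.Re x + complex.Re y.
Proof. by case: x; case: y. Qed.
Lemma ReN (x : C) : complex.Re (- x) = - complex.Re x.
Proof. by case: x. Qed.
Lemma ReB (x y : C) : complex.Re (x - y) = complex.Re x - complex.Re y.
Proof. by rewrite ReD ReN. Qed.
Lemma Re0 : complex.Re (0 : C) = 0. Proof. by []. Qed.
Lemma Re1 : complex.Re (1 : C) = 1. Proof. by []. Qed.
Lemma Re_sum (I : Type) (r : seq I) (P : pred I) (F : I -> C) :
  complex.Re (\sum_(i <- r | P i) F i) = \sum_(i <- r | P i) complex.Re (F i).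
Proof. by apply: (big_morph _ ReD Re0). Qed.
Lemma ReMcR (r : R) (x : C) : complex.Re (cR r * x) = r * complex.Re x.
Proof. by case: x => a b /=; rewrite mul0r subr0. Qed.
Lemma cRM (a b : R) : cR (a * b) = cR a * cR b.
Proof. by rewrite /cR; apply/eqP; rewrite eq_complex /= !mul0r mulr0 subr0 addr0 !eqxx. Qed.
Lemma ReJ (x : C) : complex.Re (conjc x) = complex.Re x.
Proof. by case: x. Qed.
Lemma ge0_Re (x : C) : 0 <= x -> 0 <= complex.Re x.
Proof. by rewrite lecE => /andP[]. Qed.
Lemma conj_cR (r : R) : conjc (cR r) = cR r.
Proof. by rewrite /cR /= oppr0. Qed.

Lemma adjE m k (A : 'M[C]_(m, k)) : adj A = map_mx conjc A^T.
Proof. exact: map_trmx. Qed.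
Lemma adj_mul m k l (A : 'M[C]_(m, k)) (B : 'M[C]_(k, l)) :
  adj (A *m B) = adj B *m adj A.
Proof. by rewrite /adj map_mxM trmx_mul. Qed.
Lemma adjK m k (A : 'M[C]_(m, k)) : adj (adj A) = A.
Proof. by apply/matrixP => i j; rewrite /adj !mxE conjcK. Qed.
Lemma adjD m k (A B : 'M[C]_(m, k)) : adj (A + B) = adj A + adj B.
Proof. by apply/matrixP => i j; rewrite /adj !mxE rmorphD. Qed.
Lemma adjN m k (A : 'M[C]_(m, k)) : adj (- A) = - adj A.
Proof. by apply/matrixP => i j; rewrite /adj !mxE rmorphN. Qed.
Lemma adjB m k (A B : 'M[C]_(m, k)) : adj (A - B) = adj A - adj B.
Proof. by rewrite adjD adjN. Qed.
Lemma adj0 m k : adj (0 : 'M[C]_(m, k)) = 0.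
Proof. by apply/matrixP => i j; rewrite /adj !mxE rmorph0. Qed.
Lemma adj_sum m k (I : Type) (r : seq I) (P : pred I) (F : I -> 'M[C]_(m, k)) :
  adj (\sum_(i <- r | P i) F i) = \sum_(i <- r | P i) adj (F i).
Proof. by apply: (big_morph _ (@adjD m k) (@adj0 m k)). Qed.
Lemma adjZ m k (r : R) (A : 'M[C]_(m, k)) : adj (cR r *: A) = cR r *: adj A.
Proof. by apply/matrixP => i j; rewrite /adj !mxE rmorphM /= /cR /= oppr0. Qed.
Lemma adj1 m : adj (1%:M : 'M[C]_m) = 1%:M.
Proof. by apply/matrixP => i j; rewrite /adj !mxE eq_sym rmorph_nat. Qed.
Lemma adj_entry m k (A : 'M[C]_(m, k)) i j : adj A i j = conjc (A j i).
Proof. by rewrite /adj !mxE. Qed.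


Lemma entryB m k (A B : 'M[C]_(m, k)) i j : (A - B) i j = A i j - B i j.
Proof. by rewrite !mxE. Qed.
Lemma entryD m k (A B : 'M[C]_(m, k)) i j : (A + B) i j = A i j + B i j.
Proof. by rewrite !mxE. Qed.
Lemma entryZ m k c (A : 'M[C]_(m, k)) i j : (c *: A) i j = c * A i j.
Proof. by rewrite !mxE. Qed.
Lemma entry_sum m k (I : Type) (r : seq I) (P : pred I) (F : I -> 'M[C]_(m, k)) i j :
  (\sum_(l <- r | P l) F l) i j = \sum_(l <- r | P l) F l i j.
Proof. by rewrite summxE. Qed.

Lemma qform_swap m (Q : 'M[C]_m) (x y : 'cV[C]_m) : adj Q = Q ->
  (adj y *m Q *m x) 0 0 = conjc ((adj x *m Q *m y) 0 0).
Proof.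
move=> hQ; rewrite -adj_entry !adj_mul adjK hQ mulmxA //.
Qed.

Lemma psd_amgm m (Q : 'M[C]_m) (x y : 'cV[C]_m) (t : R) : psd Q ->
  2 * t * complex.Re ((adj x *m Q *m y) 0 0) <=
  t ^+ 2 * complex.Re ((adj x *m Q *m x) 0 0) + complex.Re ((adj y *m Q *m y) 0 0).
Proof.
move=> [hQ hpos]; have := hpos (cR t *: x - y) => /ge0_Re.
rewrite adjB adjZ mulmxBl mulmxBr !mulmxBl.
rewrite -!scalemxAl -!scalemxAr ?scalerA.
rewrite !entryB !entryZ !ReB !ReMcR -cRM ReMcR (qform_swap x y hQ) ReJ.
set a := complex.Re _; set b := complex.Re _; set c := complex.Re _.
move=> h; nra.
Qed.

Lemma psd_le1 m (A : 'M[C]_m) (v : 'cV[C]_m) : psd (1%:M - A) ->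
  complex.Re ((adj v *m A *m v) 0 0) <= complex.Re ((adj v *m v) 0 0).
Proof.
move=> [_ /(_ v) /ge0_Re]; rewrite mulmxBr mulmx1 mulmxBl entryB ReB.
by rewrite subr_ge0.
Qed.

Lemma contraction m (A : 'M[C]_m) (u : 'cV[C]_m) : psd A -> psd (1%:M - A) ->
  complex.Re ((adj (A *m u) *m (A *m u)) 0 0) <= complex.Re ((adj u *m u) 0 0).
Proof.
move=> hA h1A; have := psd_amgm u (A *m u) 1 hA.
have hAh : adj A = A by case: hA.
rewrite expr1n mul1r mulr1.
rewrite adj_mul hAh -!mulmxA.
have h1 := psd_le1 u h1A.
have h2 := psd_le1 (A *m u) h1A.
rewrite adj_mul hAh -!mulmxA in h2.
move: h1 h2; rewrite -!mulmxA.
set a := complex.Re _; set b := complex.Re _; set c := complex.Re _; set d := complex.Re _.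
move=> *; lra.
Qed.

Lemma unitary_mul m (A B : 'M[C]_m) : unitary A -> unitary B -> unitary (A *m B).
Proof.
move=> [h1 h2] [h3 h4]; split; rewrite adj_mul.
  by rewrite mulmxA -(mulmxA (adj B)) h1 mulmx1 h3.
by rewrite mulmxA -(mulmxA A) h4 mulmx1 h2.
Qed.

Lemma unitary1 m : unitary (1%:M : 'M[C]_m).
Proof. by split; rewrite adj1 mulmx1. Qed.

Lemma psd_conj m k (Q : 'M[C]_m) (U : 'M[C]_(m, k)) : psd Q -> psd (adj U *m Q *m U).
Proof.
move=> [hQ hp]; split; first by rewrite !adj_mul adjK hQ mulmxA.
move=> v; have := hp (U *m v); by rewrite adj_mul !mulmxA.
Qed.

Lemma psd1 m : psd (1%:M : 'M[C]_m).
Proof.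
split; first exact: adj1.
move=> v; rewrite mulmx1 !mxE; apply: sumr_ge0 => i _.
by rewrite adj_entry mulrC mulcJ_ge0.
Qed.

Lemma tstarE m k (A : 'M[C]_(m, k)) : map_mx Num.conj A^T = adj A.
Proof. by apply/matrixP => i j; rewrite !mxE. Qed.

Section Spec.
Variable m : nat.
Variable B : 'M[C]_m.
Hypothesis hB : psd B.

Let V := spectralmx B.
Let d := spectral_diag B.

Lemma hBnormal : B \is normalmx.
Proof.
apply/normalmxP; case: hB => hBa _.
by rewrite !tstarE hBa.
Qed.

Lemma VV : V *m adj V = 1%:M.
Proof. have /unitarymxP := spectral_unitarymx B; by rewrite tstarE. Qed.

Lemma VV' : adj V *m V = 1%:M.
Proof. exact: mulmx1C VV. Qed.

Lemma Beq : B = adj V *m diag_mx d *m V.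
Proof.
have := @orthomx_spectralP _ _ B; rewrite -/V -/d => /(_ hBnormal) => {1}->.
by rewrite invmx_unitary ?tstarE // spectral_unitarymx.
Qed.

Definition ub (k : 'I_m) : 'cV[C]_m := col k (adj V).

Lemma adj_ub k : adj (ub k) = row k V.
Proof. by apply/matrixP => i j; rewrite /ub /adj !mxE conjcK. Qed.

Lemma sum_ub : \sum_k ub k *m adj (ub k) = 1%:M.
Proof.
rewrite -VV'; apply/matrixP => i j; rewrite summxE !mxE; apply: eq_bigr => k _.
by rewrite adj_ub !mxE big_ord1 !mxE.
Qed.

Lemma ub_norm k : (adj (ub k) *m ub k) 0 0 = 1.
Proof.
transitivity ((V *m adj V) k k); last by rewrite VV mxE eqxx.
rewrite adj_ub /ub !mxE. apply: eq_bigr => l _. rewrite !mxE. reflexivity.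
Qed.

Lemma B_ub k : B *m ub k = d 0 k *: ub k.
Proof.
have -> : B *m ub k = col k (B *m adj V) by rewrite /ub !colE mulmxA.
rewrite {1}Beq -!mulmxA VV mulmx1 mul_mx_diag.
by apply/matrixP => i j; rewrite !mxE mulrC.
Qed.

Lemma d_ge0 k : 0 <= d 0 k.
Proof.
case: hB => _ /(_ (ub k)); rewrite -mulmxA B_ub -scalemxAr entryZ ub_norm.
by rewrite mulr1.
Qed.

Lemma tr_ub (X : 'M[C]_m) : \tr X = \sum_k (adj (ub k) *m X *m ub k) 0 0.
Proof.
rewrite -{1}[X]mulmx1 -sum_ub mulmx_sumr raddf_sum /=; apply: eq_bigr => k _.
by rewrite mulmxA mxtrace_mulC mulmxA trace_mx11.
Qed.

Lemma trB : complex.Re (\tr B) = \sum_k complex.Re (d 0 k).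
Proof.
rewrite tr_ub Re_sum; apply: eq_bigr => k _.
by rewrite -mulmxA B_ub -scalemxAr entryZ ub_norm mulr1.
Qed.

Lemma BB_ub k : complex.Re ((adj (ub k) *m (B *m B) *m ub k) 0 0) = complex.Re (d 0 k) ^+ 2.
Proof.
rewrite -!mulmxA B_ub -scalemxAr B_ub -!scalemxAr !entryZ ub_norm mulr1.
have := d_ge0 k; rewrite lecE /= => /andP[/eqP h _].
case: (d 0 k) h => a b /= ->; by rewrite expr2 !mulr0 subr0.
Qed.

End Spec.

Lemma trBB m (Y Z : 'M[C]_m) : \tr (Y - Z) = \tr Y - \tr Z.
Proof. exact: linearB. Qed.
Lemma trDD m (Y Z : 'M[C]_m) : \tr (Y + Z) = \tr Y + \tr Z.
Proof. exact: linearD. Qed.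
Lemma trZZ m c (Y : 'M[C]_m) : \tr (c *: Y) = c * \tr Y.
Proof. exact: linearZ. Qed.
Lemma tr_sum m (I : Type) (r : seq I) (P : pred I) (F : I -> 'M[C]_m) :
  \tr (\sum_(i <- r | P i) F i) = \sum_(i <- r | P i) \tr (F i).
Proof. exact: linear_sum. Qed.

Definition sg (b : bool) : R := if b then 1 else -1.

Section Prob.
Variable N : nat.

Definition flip (j : 'I_N) (s : {ffun 'I_N -> bool}) : {ffun 'I_N -> bool} :=
  [ffun i => if i == j then ~~ s i else s i].

Lemma flipK j : involutive (flip j).
Proof.
move=> s; apply/ffunP => i; rewrite !ffunE; case: (i == j) => //=.
by rewrite negbK.
Qed.

Lemma sum_flip0 (F : {ffun 'I_N -> bool} -> R) j :
  (forall s, F (flip j s) = - F s) -> \sum_s F s = 0.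
Proof.
move=> hF; have h : \sum_s F s = \sum_s F (flip j s).
  by rewrite (reindex_inj (can_inj (flipK j))).
have h2 : \sum_s F (flip j s) = - \sum_s F s.
  by rewrite -sumrN; apply: eq_bigr => s _; rewrite hF.
lra.
Qed.

Lemma sg_flip j s : sg (flip j s j) = - sg (s j).
Proof. by rewrite /flip ffunE eqxx; case: (s j) => /=; rewrite ?opprK. Qed.

Lemma sg_flip_ne j j' s : j' != j -> sg (flip j s j') = sg (s j').
Proof. by move=> h; rewrite /flip ffunE (negbTE h). Qed.

Lemma sum_sg j : \sum_(s : {ffun 'I_N -> bool}) sg (s j) = 0.
Proof. by apply: (sum_flip0 (F := fun s => sg (s j))) => s; exact: sg_flip. Qed.

Lemma sum_const1 : \sum_(s : {ffun 'I_N -> bool}) (1 : R) = (2 ^ N)%:R.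
Proof. by rewrite sumr_const card_ffun card_bool card_ord. Qed.

Lemma sum_sg2 j j' :
  \sum_(s : {ffun 'I_N -> bool}) sg (s j) * sg (s j') = if j == j' then (2 ^ N)%:R else 0.
Proof.
case: eqP => [<-|hne].
  rewrite -sum_const1; apply: eq_bigr => s _; by case: (s j); rewrite /sg ?mulr1 ?mulrNN ?mulr1.
apply: (@sum_flip0 (fun s => sg (s j) * sg (s j')) j) => s.
rewrite sg_flip sg_flip_ne ?mulNr //; apply/eqP => h; apply: hne; by rewrite h.
Qed.

Lemma sum_prod (Y : finType) (p : Y -> R) (g : Y -> R) (i : 'I_N) :
  \sum_y p y = 1 ->
  \sum_(z : {ffun 'I_N -> Y}) (\prod_j p (z j)) * g (z i) = \sum_y p y * g y.
Proof.
move=> hp.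
pose F j y := if j == i then p y * g y else p y.
have -> : \sum_(z : {ffun 'I_N -> Y}) (\prod_j p (z j)) * g (z i) =
          \sum_(z : {ffun 'I_N -> Y}) \prod_j F j (z j).
  apply: eq_bigr => z _; rewrite (bigD1 i) //= [RHS](bigD1 i) //= /F eqxx.
  rewrite mulrAC; congr (_ * _); apply: eq_bigr => j /negbTE -> //.
rewrite -bigA_distr_bigA /= (bigD1 i) //= /F eqxx [X in _ * X]big1 ?mulr1 //.
by move=> j /negbTE ->.
Qed.

Lemma sum_prod1 (Y : finType) (p : Y -> R) :
  \sum_y p y = 1 -> \sum_(z : {ffun 'I_N -> Y}) \prod_j p (z j) = 1.
Proof.
move=> hp.
rewrite -(@bigA_distr_bigA _ 0 1 *%R +%R _ _ (fun (j : 'I_N) (y : Y) => p y)) /=.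
by apply: big1 => j _; exact: hp.
Qed.

End Prob.

Section Sample.
Variables (n N : nat) (X : finType) (S : X -> 'M[C]_n.+1).
Variable u : 'I_n.+1 -> 'cV[C]_n.+1.
Hypothesis u_tr : forall Y : 'M[C]_n.+1, \tr Y = \sum_k (adj (u k) *m Y *m u k) 0 0.
Hypothesis u_norm : forall k, (adj (u k) *m u k) 0 0 = 1.
Variable t : 'I_n.+1 -> R.
Hypothesis t_gt0 : forall k, 0 < t k.

Definition hh (y : bool * X) : R :=
  if y.1 then 1 - complex.Re (\tr (kappa (S y.2))) else 1.
Definition tau (z : {ffun 'I_N -> bool * X}) (s : {ffun 'I_N -> bool}) j : R :=
  if (z j).1 then sg (s j) else - sg (s j).
Definition KK z s : 'M[C]_n.+1 := \sum_j cR (tau z s j) *: kappa (S (z j).2).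
Definition Qk z s k : R :=
  complex.Re ((adj (KK z s *m u k) *m (KK z s *m u k)) 0 0).

Lemma sample_bound (U : 'M[C]_n.+1) (M : bool -> 'M[C]_n.+1) (z : {ffun 'I_N -> bool * X}) (s : {ffun 'I_N -> bool}) :
  unitary U -> binPOVM M ->
  \sum_j sg (s j) * loss M (rho_enc U (S (z j).2)) (z j).1 <=
  \sum_j sg (s j) * hh (z j) + \sum_k (t k + Qk z s k / t k) / 2.
Proof.
move=> [hU1 hU2] [hM0 [hM1 hMs]].
have hM1e : M true = 1%:M - M false by rewrite -hMs addrC addKr.
pose A := adj U *m M false *m U.
pose a j := complex.Re (\tr (A *m kappa (S (z j).2))).
have step1 : forall j, sg (s j) * loss M (rho_enc U (S (z j).2)) (z j).1 =
    sg (s j) * hh (z j) + tau z s j * a j.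
  move=> j; rewrite /loss /hh /tau /a /rho_enc.
  have trA : forall Y : 'M[C]_n.+1, \tr (M false *m (U *m Y *m adj U)) = \tr (A *m Y).
    move=> Y; rewrite /A mulmxA mxtrace_mulC !mulmxA //.
  have trK : forall Y : 'M[C]_n.+1, \tr (U *m Y *m adj U) = \tr Y.
    by move=> Y; rewrite mxtrace_mulC mulmxA hU1 mul1mx.
  case: (z j).1 => /=.
    rewrite hM1e mulmxBl mul1mx trBB trK trA !ReB Re1.
    ring.
  rewrite trA ReB Re1; ring.
rewrite (eq_bigr _ (fun j _ => step1 j)) big_split /= lerD2l.
have hAadj : adj A = A by case: (psd_conj U hM0).
have psdA : psd A := psd_conj U hM0.
have psd1A : psd (1%:M - A).
  have -> : 1%:M - A = adj U *m M true *m U.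
    by rewrite hM1e mulmxBr mulmxBl mulmx1 hU1.
  exact: psd_conj.
have -> : \sum_j tau z s j * a j = complex.Re (\tr (A *m KK z s)).
  rewrite /KK mulmx_sumr tr_sum Re_sum; apply: eq_bigr => j _.
  by rewrite -scalemxAr trZZ ReMcR.
rewrite u_tr Re_sum; apply: ler_sum => k _.
have hc := contraction (u k) psdA psd1A; rewrite u_norm Re1 in hc.
have hp := psd_amgm (A *m u k) (KK z s *m u k) (t k) (psd1 _); rewrite !mulmx1 in hp.
have -> : (adj (u k) *m (A *m KK z s) *m u k) = adj (A *m u k) *m (KK z s *m u k).
  by rewrite adj_mul hAadj !mulmxA.
rewrite /Qk; move: hc hp.
set P := complex.Re _; set Q := complex.Re _; set a0 := complex.Re _.
have ht := t_gt0 k.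
have hti : t k * (t k)^-1 = 1 by rewrite divff // gt_eqF.
have hti0 : 0 < (t k)^-1 by rewrite invr_gt0.
move=> h1 h2.
have : 0 <= (t k)^-1 * (t k ^+ 2 + a0 - 2 * t k * Q).
  apply: mulr_ge0; first exact: ltW.
  have : t k ^+ 2 * P <= t k ^+ 2.
    by rewrite -[X in _ <= X]mulr1; apply: ler_wpM2l => //; exact: sqr_ge0.
  lra.
have -> : (t k)^-1 * (t k ^+ 2 + a0 - 2 * t k * Q) = t k + a0 / t k - 2 * Q.
  by field; rewrite gt_eqF.
lra.
Qed.

Lemma adj_kappa (W : 'M[C]_n.+1) : adj (kappa W) = kappa W.
Proof. by rewrite /kappa /proj0 !adj_mul !adjK !mulmxA. Qed.

Definition ff (k : 'I_n.+1) (y : bool * X) : R :=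
  complex.Re ((adj (kappa (S y.2) *m u k) *m (kappa (S y.2) *m u k)) 0 0).

Lemma Qk_expand z s k : Qk z s k =
  \sum_j \sum_j' tau z s j * tau z s j' *
     complex.Re ((adj (kappa (S (z j).2) *m u k) *m (kappa (S (z j').2) *m u k)) 0 0).
Proof.
rewrite /Qk /KK mulmx_suml adj_sum mulmx_suml entry_sum Re_sum.
apply: eq_bigr => j _; rewrite mulmx_sumr entry_sum Re_sum; apply: eq_bigr => j' _.
rewrite -!scalemxAl adjZ -scalemxAl -scalemxAr !entryZ mulrA -cRM ReMcR //.
Qed.

Definition esgn (y : bool * X) : R := if y.1 then 1 else -1.

Lemma tauE z s j : tau z s j = esgn (z j) * sg (s j).
Proof. by rewrite /tau /esgn; case: (z j).1; rewrite ?mul1r ?mulN1r. Qed.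

Lemma sum_tau2 z j j' :
  \sum_s tau z s j * tau z s j' = if j == j' then (2 ^ N)%:R else 0.
Proof.
transitivity (esgn (z j) * esgn (z j') * \sum_(s : {ffun 'I_N -> bool}) sg (s j) * sg (s j')).
  rewrite mulr_sumr; apply: eq_bigr => s _; rewrite !tauE; ring.
rewrite sum_sg2; case: eqP => [<-|]; last by rewrite mulr0.
by rewrite /esgn; case: (z j).1; rewrite ?mulr1 ?mulrNN ?mul1r ?mulr1.
Qed.

Lemma expect_s_Qk z k :
  \sum_(s : {ffun 'I_N -> bool}) (2 ^ N)%:R^-1 * Qk z s k = \sum_j ff k (z j).
Proof.
under eq_bigr do rewrite Qk_expand mulr_sumr.
rewrite exchange_big /=; apply: eq_bigr => j _.
under eq_bigr do rewrite mulr_sumr.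
rewrite exchange_big /= (bigD1 j) //= [X in _ + X]big1 ?addr0.
  set q := complex.Re _.
  rewrite (eq_bigr (fun s => q * ((2 ^ N)%:R^-1 * (tau z s j * tau z s j)))); last first.
    by move=> s _; ring.
  rewrite -mulr_sumr -mulr_sumr sum_tau2 eqxx /ff mulVf ?mulr1 //.
  by rewrite pnatr_eq0 expn_eq0.
move=> j' hj'.
set q := complex.Re _.
rewrite (eq_bigr (fun s => q * ((2 ^ N)%:R^-1 * (tau z s j * tau z s j')))); last first.
  by move=> s _; ring.
by rewrite -mulr_sumr -mulr_sumr sum_tau2 eq_sym (negbTE hj') !mulr0.
Qed.

Lemma expect_s_sg z :
  \sum_(s : {ffun 'I_N -> bool}) (2 ^ N)%:R^-1 * (\sum_j sg (s j) * hh (z j)) = 0.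
Proof.
under eq_bigr do rewrite mulr_sumr.
rewrite exchange_big /=; apply: big1 => j _.
rewrite (eq_bigr (fun s : {ffun 'I_N -> bool} => hh (z j) * ((2 ^ N)%:R^-1 * sg (s j)))); last first.
  by move=> s _; ring.
by rewrite -mulr_sumr -mulr_sumr sum_sg !mulr0.
Qed.

Lemma expect_z (p : bool * X -> R) (f : bool * X -> R) : \sum_y p y = 1 ->
  \sum_(z : {ffun 'I_N -> bool * X}) (\prod_j p (z j)) * (\sum_j f (z j)) =
  N%:R * \sum_y p y * f y.
Proof.
move=> hp; under eq_bigr do rewrite mulr_sumr.
rewrite exchange_big /=.
rewrite (eq_bigr (fun j => \sum_y p y * f y)); last by move=> j _; rewrite sum_prod.
by rewrite sumr_const card_ord mulr_natl.
Qed.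

Lemma expect_E (p : bool * X -> R) k :
  \sum_y p y * ff k y = complex.Re ((adj (u k) *m Ekappa2 p S *m u k) 0 0).
Proof.
transitivity (\sum_c \sum_x p (c, x) * ff k (c, x)).
  by rewrite pair_big; apply: eq_bigr => [[c x]] _.
rewrite big_bool /= -big_split /=.
rewrite /Ekappa2 mulmx_sumr mulmx_suml entry_sum Re_sum; apply: eq_bigr => x _.
rewrite -scalemxAr -scalemxAl entryZ ReMcR /marginal /ff /=.
rewrite adj_mul adj_kappa !mulmxA; ring.
Qed.
End Sample.


Lemma lin_exp (T K : finType) (w f : T -> R) (g : K -> T -> R)
  (c : R) (al be : K -> R) :
  \sum_a w a * (c * f a + \sum_k (al k + be k * g k a)) =
  c * (\sum_a w a * f a) +
  \sum_k (al k * (\sum_a w a) + be k * (\sum_a w a * g k a)).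
Proof.
transitivity (\sum_a (c * (w a * f a) +
    \sum_k (al k * w a + be k * (w a * g k a)))).
  apply: eq_bigr => a _; rewrite mulrDr mulr_sumr.
  congr (_ + _); first ring.
  by apply: eq_bigr => k _; ring.
rewrite big_split /= -!mulr_sumr; congr (_ + _).
rewrite exchange_big /=; apply: eq_bigr => k _.
by rewrite big_split /= -!mulr_sumr.
Qed.

Lemma numeric_bound (N : nat) (d eps c t : R) : 0 <= d -> 0 < eps ->
  c = (Num.sqrt N%:R)^-1 ->
  t = (if N == 0%N then 1 else Num.sqrt N%:R) * (d + eps) ->
  c / 2 * t + c / (2 * t) * (N%:R * d ^+ 2) <= d + eps.
Proof.
move=> hd he -> ->.
have hD : 0 < d + eps by lra.
case: (posnP N) => [->|hN].
  by rewrite sqrtr0 invr0 !mul0r add0r; lra.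
have hN' : N != 0%N by rewrite -lt0n.
set s := Num.sqrt N%:R.
have hs : 0 < s by rewrite /s sqrtr_gt0 ltr0n.
have hNs : N%:R = s ^+ 2 by rewrite /s sqr_sqrtr // ler0n.
rewrite hNs.
have -> : s^-1 / 2 * (s * (d + eps)) + s^-1 / (2 * (s * (d + eps))) * (s ^+ 2 * d ^+ 2)
   = (d + eps) / 2 + d ^+ 2 / (2 * (d + eps)).
  by field; rewrite !gt_eqF.
have : d ^+ 2 / (2 * (d + eps)) <= (d + eps) / 2.
  rewrite ler_pdivrMr; last by lra.
  have -> : (d + eps) / 2 * (2 * (d + eps)) = (d + eps) ^+ 2 by field.
  rewrite ler_sqr ?nnegrE; lra.
lra.
Qed.
End Aux.

Unset Implicit Arguments.

(* Tr(sqrt(E[kappa^2])) is expressed via the (unique) PSD square root B. *)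
Theorem mainTheorem4 (R : realType) (n L N : nat) (P : Type) (X : finType)
  (p : bool * X -> R) (Theta : set ('I_L -> P))
  (Ul : 'I_L -> P -> 'M[R[i]]_n.+1) (S : X -> 'M[R[i]]_n.+1) :
  is_distr p ->
  (forall l t, unitary (Ul l t)) ->
  (forall x, unitary (S x)) ->
  forall B : 'M[R[i]]_n.+1, psd B -> B *m B = Ekappa2 p S ->
  rademacher N p Theta Ul S <= complex.Re (\tr B).
Proof.
move=> [hp0 hp1] hUl _ B hB hBB.
pose dd k := complex.Re (spectral_diag B 0 k).
have dd_ge0 : forall k, 0 <= dd k by move=> k; apply: ge0_Re; exact: d_ge0.
rewrite (trB hB) -/dd.
have [[th0 hth0]|hT] := pselect (exists th, Theta th); last first.
  apply: (@le_trans _ _ 0); last by apply: sumr_ge0 => k _; exact: dd_ge0.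
  rewrite /rademacher big1 // => z _; rewrite big1 // => s _.
  rewrite [sup _](_ : _ = 0) ?mulr0 //.
  rewrite -[RHS](@sup0 R); congr sup.
  apply/seteqP; split => r //= [th [M [hth _]]]; exfalso; apply: hT; by exists th.
apply/ler_addgt0Pr => e he.
pose eps := e / (n.+1)%:R.
have heps : 0 < eps by rewrite divr_gt0 // ltr0n.
pose t k := (if N == 0%N then 1 else Num.sqrt N%:R) * (dd k + eps).
have t_gt0 : forall k, 0 < t k.
  move=> k; apply: mulr_gt0; last by have := dd_ge0 k; lra.
  case: ifP => // /negbT hN; by rewrite sqrtr_gt0 ltr0n lt0n.
pose c : R := (Num.sqrt N%:R)^-1.
have c_ge0 : 0 <= c by rewrite invr_ge0 sqrtr_ge0.
pose u := ub B.
pose w (z : {ffun 'I_N -> bool * X}) (s : {ffun 'I_N -> bool}) :=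
  (\prod_j p (z j)) * 2 ^- N.
pose G (z : {ffun 'I_N -> bool * X}) (s : {ffun 'I_N -> bool}) :=
  c * (\sum_j sg R (s j) * hh S (z j)) +
  \sum_k (c / 2 * t k + c / (2 * t k) * Qk S u z s k).
pose M0 (b : bool) : 'M[R[i]]_n.+1 := if b then 0 else 1%:M.
have hM0 : binPOVM M0.
  split; first exact: psd1.
  split; last by rewrite /M0 addr0.
  split; first by rewrite /M0 adj0.
  by move=> v; rewrite /M0 mulmx0 mul0mx mxE.
apply: (@le_trans _ _ (\sum_z \sum_s w z s * G z s)).
  rewrite /rademacher; apply: ler_sum => z _; apply: ler_sum => s _.
  apply: ler_wpM2l.
    apply: mulr_ge0; first by apply: prodr_ge0 => j _; exact: hp0.
    by rewrite invr_ge0 exprn_ge0.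
  apply: ge_sup.
    by eexists; exists th0, M0; split; [exact: hth0 | split; [exact: hM0 | reflexivity]].
  move=> r [th [M [hth [hM ->]]]].
  have hU : unitary (Uprod Ul th).
    rewrite /Uprod; apply: big_ind => //; [exact: unitary1 | exact: unitary_mul].
  rewrite -mulr_suml.
  apply: (le_trans (ler_wpM2r c_ge0 (sample_bound S (tr_ub B) (ub_norm B) t_gt0 z s hU hM))).
  rewrite /G mulrDl mulrC mulr_suml; apply: lerD => //.
  apply: ler_sum => k _; rewrite le_eqVlt; apply/orP; left; apply/eqP.
  field; exact: lt0r_neq0.
have h2N : (2 : R) ^- N = (2 ^ N)%:R^-1 by rewrite natrX.
have hS1 : \sum_(s : {ffun 'I_N -> bool}) (2 : R) ^- N = 1.
  rewrite sumr_const card_ffun card_bool card_ord.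
  have -> : (2:R) ^- N *+ (2 ^ N)%N = 2 ^- N * (2 ^ N)%N%:R by rewrite mulr_natr.
  by rewrite natrX mulVf // expf_neq0 // pnatr_eq0.
have hW1 : \sum_z \sum_s w z s * (\sum_j sg R (s j) * hh S (z j)) = 0.
  apply: big1 => z _.
  rewrite (eq_bigr (fun s : {ffun 'I_N -> bool} => (\prod_j p (z j)) * ((2 ^ N)%:R^-1 * \sum_j sg R (s j) * hh S (z j)))); last first.
    by move=> s _; rewrite /w h2N mulrA.
  by rewrite -mulr_sumr expect_s_sg mulr0.
have hW2 : \sum_z \sum_s w z s = 1.
  rewrite -(sum_prod1 N hp1); apply: eq_bigr => z _.
  by rewrite /w -mulr_sumr hS1 mulr1.
have hW3 : forall k, \sum_z \sum_s w z s * Qk S u z s k = N%:R * dd k ^+ 2.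
  move=> k.
  transitivity (\sum_(z : {ffun 'I_N -> bool * X}) (\prod_j p (z j)) * \sum_j ff S u k (z j)).
    apply: eq_bigr => z _; rewrite -expect_s_Qk mulr_sumr; apply: eq_bigr => s _.
    by rewrite /w h2N mulrA.
  by rewrite expect_z // expect_E -hBB BB_ub.
rewrite pair_big /= /G.
have E := lin_exp (fun x => w x.1 x.2) (fun x => \sum_j sg R (x.2 j) * hh S (x.1 j))
  (fun k x => Qk S u x.1 x.2 k) c (fun k => c / 2 * t k) (fun k => c / (2 * t k)).
rewrite E {E}.
have -> : \sum_(x : {ffun 'I_N -> bool * X} * {ffun 'I_N -> bool})
    w x.1 x.2 * \sum_j sg R (x.2 j) * hh S (x.1 j) = 0.
  by rewrite -[RHS]hW1 pair_big.
have -> : \sum_(x : {ffun 'I_N -> bool * X} * {ffun 'I_N -> bool}) w x.1 x.2 = 1.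
  by rewrite -[RHS]hW2 pair_big.
rewrite mulr0 add0r.
have -> : \sum_k dd k + e = \sum_k (dd k + eps).
  rewrite big_split /= sumr_const card_ord -mulr_natr /eps divfK //.
  by rewrite pnatr_eq0.
apply: ler_sum => k _.
have -> : \sum_(x : {ffun 'I_N -> bool * X} * {ffun 'I_N -> bool}) w x.1 x.2 * Qk S u x.1 x.2 k
    = N%:R * dd k ^+ 2.
  by rewrite -[RHS]hW3 pair_big.
rewrite mulr1; apply: numeric_bound => //; exact: dd_ge0.
Qed.
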